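(* Let $x_0$ be the real root in $(0,1)$ and $x_1$ the real root in $(-2,-1)$ of the polynomial $x^6 + x^5 - 2 x^3 + 2 x - 1$, and put $y = \frac{1}{1-x_1}$. Then \[ \operatorname{L}(x_0) + \operatorname{L}(y) = \frac{4\pi^2}{21}. \]
   Context: $\operatorname{L}(x) := \operatorname{Li}_2(x) + \frac12 \ln x \ln(1-x)$ is the Rogers dilogarithm, where $\operatorname{Li}_2(x)=\sum_{n\ge1}x^n/n^2$ for $0<x<1$. *)

(* Defs.v *)
From Stdlib Require Import Reals.
From Coquelicot Require Import Coquelicot.
Open Scope R_scope.

(* Dilogarithm Li_2(x) = sum_{n>=1} x^n / n^2 (used for 0 < x < 1),
   written with index shift k = n-1. *)
Definition Li2 (x : R) : R :=
  Series (fun k : nat => x ^ (S k) / (INR (S k)) ^ 2).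

Definition RogersL (x : R) : R := Li2 x + / 2 * ln x * ln (1 - x).

Definition P6 (x : R) : R := x ^ 6 + x ^ 5 - 2 * x ^ 3 + 2 * x - 1.

(* Main.v *)
Require Import Defs.
From Stdlib Require Import Reals Lra Lia Psatz Nsatz.
From Coquelicot Require Import Coquelicot.
Open Scope R_scope.

Definition a1 (k : nat) : R := / (INR (S k)) ^ 2.
Definition b1 (k : nat) : R := / INR (S k).

Lemma Li2_PS x : Li2 x = PSeries (PS_incr_1 a1) x.
Proof.
  rewrite PSeries_incr_1. unfold PSeries, Li2. rewrite <- Series_scal_l.
  apply Series_ext; intro n. unfold a1. change (x ^ S n) with (x * x ^ n). unfold Rdiv. ring.
Qed.

Lemma lim_invSS : is_lim_seq (fun n => / INR (S (S n))) 0.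
Proof.
  assert (H := is_lim_seq_inv INR p_infty is_lim_seq_INR).
  simpl in H. specialize (H ltac:(discriminate)).
  apply is_lim_seq_incr_1 in H. apply is_lim_seq_incr_1 in H. exact H.
Qed.

Lemma lim_ratio1 : is_lim_seq (fun n => 1 - / INR (S (S n))) 1.
Proof.
  assert (H := is_lim_seq_minus' (fun _ => 1) _ 1 0 (is_lim_seq_const 1) lim_invSS).
  rewrite Rminus_0_r in H. exact H.
Qed.

Lemma CV_a1 : CV_radius a1 = 1.
Proof.
  replace (Finite 1) with (Finite (/ 1)) by (f_equal; field).
  apply CV_radius_finite_DAlembert.
  - intro n. unfold a1. apply Rinv_neq_0_compat. apply pow_nonzero.
    apply not_0_INR. lia.
  - lra.
  - apply is_lim_seq_ext with (fun n => (1 - / INR (S (S n))) * (1 - / INR (S (S n)))).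
    + intro n. unfold a1. rewrite Rabs_pos_eq.
      * rewrite !S_INR. field. pose proof (pos_INR n). lra.
      * apply Rlt_le; unfold Rdiv; repeat (apply Rmult_lt_0_compat || apply Rinv_0_lt_compat || apply pow_lt || apply lt_0_INR); (lia || lra).
    + assert (H := is_lim_seq_mult' _ _ 1 1 lim_ratio1 lim_ratio1).
      rewrite Rmult_1_l in H. exact H.
Qed.

Lemma CV_b1 : CV_radius b1 = 1.
Proof.
  replace (Finite 1) with (Finite (/ 1)) by (f_equal; field).
  apply CV_radius_finite_DAlembert.
  - intro n. unfold b1. apply Rinv_neq_0_compat. apply not_0_INR. lia.
  - lra.
  - apply is_lim_seq_ext with (fun n => (1 - / INR (S (S n)))).
    + intro n. unfold b1. rewrite Rabs_pos_eq.
      * rewrite !S_INR. field. pose proof (pos_INR n). lra.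
      * apply Rlt_le; unfold Rdiv; repeat (apply Rmult_lt_0_compat || apply Rinv_0_lt_compat || apply pow_lt || apply lt_0_INR); (lia || lra).
    + apply lim_ratio1.
Qed.

Lemma PS_derive_a : forall k, PS_derive (PS_incr_1 a1) k = b1 k.
Proof.
  intro k. unfold PS_derive. change (PS_incr_1 a1 (S k)) with (a1 k). unfold a1, b1.
  field. apply not_0_INR. lia.
Qed.

Lemma PS_derive_b : forall k, PS_derive (PS_incr_1 b1) k = 1.
Proof.
  intro k. unfold PS_derive. change (PS_incr_1 b1 (S k)) with (b1 k). unfold b1.
  field. apply not_0_INR. lia.
Qed.

Lemma Li2_derive_PS x : -1 < x < 1 -> is_derive Li2 x (PSeries b1 x).
Proof.
  intro Hx.
  apply is_derive_ext with (PSeries (PS_incr_1 a1)).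
  { intro t. symmetry. apply Li2_PS. }
  rewrite <- (PSeries_ext _ _ x PS_derive_a).
  apply is_derive_PSeries. rewrite CV_radius_incr_1, CV_a1. simpl.
  apply Rabs_def1; lra.
Qed.

Lemma geom_PS x : -1 < x < 1 -> PSeries (fun _ => 1) x = / (1 - x).
Proof.
  intro Hx. unfold PSeries. rewrite (Series_ext _ (fun n => x ^ n)) by (intro; ring).
  apply is_series_unique, is_series_geom. apply Rabs_def1; lra.
Qed.

Lemma xb1_ln x : -1 < x < 1 -> x * PSeries b1 x = - ln (1 - x).
Proof.
  intro Hx.
  set (h := fun t => PSeries (PS_incr_1 b1) t + ln (1 - t)).
  assert (Hd : forall t, -1 < t < 1 -> is_derive h t 0).
  { intros t Ht. unfold h.
    replace 0 with (PSeries (fun _ => 1) t + (-1) * / (1 - t)).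
    2:{ rewrite geom_PS by lra. field. lra. }
    assert (H1 : is_derive (PSeries (PS_incr_1 b1)) t (PSeries (fun _ => 1) t)).
    { rewrite <- (PSeries_ext _ _ t PS_derive_b).
      apply is_derive_PSeries. rewrite CV_radius_incr_1, CV_b1. simpl.
      apply Rabs_def1; lra. }
    assert (H2 : is_derive (fun t => ln (1 - t)) t (-1 * / (1 - t))).
    { auto_derive. lra. field. lra. }
    exact (is_derive_plus _ _ _ _ _ H1 H2). }
  assert (H0 : h 0 = 0).
  { unfold h. rewrite PSeries_incr_1. rewrite Rminus_0_r, ln_1. ring. }
  destruct (MVT_gen h 0 x (fun _ => 0)) as [c [Hc Hmvt]].
  - intros t Ht. apply Hd. split.
    + apply Rlt_le_trans with (Rmin 0 x); [|lra]. apply Rmin_glb_lt; lra.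
    + apply Rle_lt_trans with (Rmax 0 x); [lra|]. apply Rmax_lub_lt; lra.
  - intros t Ht. apply continuity_pt_filterlim. apply (ex_derive_continuous h).
    exists 0. apply Hd. split.
    + apply Rlt_le_trans with (Rmin 0 x); [|lra]. apply Rmin_glb_lt; lra.
    + apply Rle_lt_trans with (Rmax 0 x); [lra|]. apply Rmax_lub_lt; lra.
  - rewrite H0, Rmult_0_l, Rminus_0_r in Hmvt. unfold h in Hmvt.
    rewrite PSeries_incr_1 in Hmvt. lra.
Qed.
Lemma ln_nonpos x : x <= 0 -> ln x = 0.
Proof. intro H. unfold ln. destruct (Rlt_dec 0 x) as [h|h]; [exfalso; lra | reflexivity]. Qed.

Lemma ln_le_sub1 y : 0 < y -> ln y <= y - 1.
Proof.
  intro Hy. rewrite <- (ln_exp (y - 1)).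
  apply ln_le. exact Hy. pose proof (exp_ineq1_le (y - 1)). lra.
Qed.

Lemma ln_ge_1sub y : 0 < y -> 1 - / y <= ln y.
Proof.
  intro Hy. pose proof (ln_le_sub1 (/ y) (Rinv_0_lt_compat _ Hy)).
  rewrite ln_Rinv in H by exact Hy. lra.
Qed.

Lemma lnln_bound x : 0 < x <= /2 -> Rabs (ln x * ln (1 - x)) <= 4 * sqrt x.
Proof.
  intro Hx.
  assert (Hs : 0 < sqrt x) by (apply sqrt_lt_R0; lra).
  assert (Hss : sqrt x * sqrt x = x) by (apply sqrt_sqrt; lra).
  assert (H1 : ln x <= 0).
  { pose proof (ln_le_sub1 x ltac:(lra)). lra. }
  assert (H2 : - ln x <= 2 / sqrt x).
  { assert (E : ln x = 2 * ln (sqrt x)).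
    { rewrite <- Hss at 1. rewrite ln_mult by lra. ring. }
    pose proof (ln_ge_1sub (sqrt x) Hs).
    rewrite E. unfold Rdiv. 
    assert (0 < / sqrt x) by (apply Rinv_0_lt_compat; lra). lra. }
  assert (H3 : ln (1 - x) <= 0).
  { pose proof (ln_le_sub1 (1 - x) ltac:(lra)). lra. }
  assert (H4 : - ln (1 - x) <= 2 * x).
  { pose proof (ln_ge_1sub (1 - x) ltac:(lra)).
    assert (/ (1 - x) <= 1 + 2 * x).
    { apply (Rmult_le_reg_r (1 - x)). lra. rewrite Rinv_l by lra. nra. }
    lra. }
  rewrite Rabs_pos_eq by nra.
  replace (ln x * ln (1 - x)) with ((- ln x) * (- ln (1 - x))) by ring.
  apply Rle_trans with ((2 / sqrt x) * (2 * x)).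
  { apply Rmult_le_compat; lra. }
  rewrite <- Hss at 2. right. field. lra.
Qed.

Definition lnln (x : R) : R := ln x * ln (1 - x).

Lemma lnln_cont0 : forall eps, 0 < eps -> exists d, 0 < d /\
  forall x, Rabs x < d -> Rabs (lnln x) < eps.
Proof.
  intros eps He. exists (Rmin (/2) ((eps / 8) ^ 2)). split.
  { apply Rmin_glb_lt. lra. apply pow_lt. lra. }
  intros x Hx. unfold lnln.
  destruct (Rle_dec x 0) as [Hn|Hp].
  { rewrite ln_nonpos by exact Hn. rewrite Rmult_0_l, Rabs_R0. lra. }
  assert (Hx1 : x < /2).
  { apply Rle_lt_trans with (Rabs x). apply RRle_abs. 
    apply Rlt_le_trans with (1 := Hx). apply Rmin_l. }
  assert (Hx2 : x < (eps/8)^2).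
  { apply Rle_lt_trans with (Rabs x). apply RRle_abs. 
    apply Rlt_le_trans with (1 := Hx). apply Rmin_r. }
  apply Rle_lt_trans with (4 * sqrt x). apply lnln_bound; lra.
  assert (sqrt x < eps / 8).
  { rewrite <- (sqrt_pow2 (eps/8)) by lra. apply sqrt_lt_1; lra. }
  lra.
Qed.

Lemma lnln_sym x : lnln (1 - x) = lnln x.
Proof. unfold lnln. replace (1 - (1 - x)) with x by ring. ring. Qed.

Lemma lnln_cont0_pt : continuity_pt lnln 0.
Proof.
  intros eps He. destruct (lnln_cont0 eps He) as [d [Hd H]].
  exists d. split. exact Hd. intros x [_ Hx]. simpl in *. unfold R_dist in *.
  assert (lnln 0 = 0) by (unfold lnln; rewrite ln_nonpos by lra; ring).
  rewrite H0, Rminus_0_r. rewrite Rminus_0_r in Hx. apply H. exact Hx.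
Qed.

Lemma RogersL_eq x : RogersL x = Li2 x + / 2 * lnln x.
Proof. unfold RogersL, lnln. ring. Qed.

Definition dL (x : R) : R := - / 2 * (ln (1 - x) / x + ln x / (1 - x)).

Lemma Li2_derive x : 0 < x < 1 -> is_derive Li2 x (- ln (1 - x) / x).
Proof.
  intro Hx. replace (- ln (1 - x) / x) with (PSeries b1 x).
  apply Li2_derive_PS; lra.
  rewrite <- xb1_ln by lra. field. lra.
Qed.

Lemma L_derive x : 0 < x < 1 -> is_derive RogersL x (dL x).
Proof.
  intro Hx.
  assert (H1 := Li2_derive x Hx).
  assert (H2 : is_derive (fun t => / 2 * ln t * ln (1 - t)) x
     (/2 * (/ x * ln (1 - x) - ln x / (1 - x)))).
  { auto_derive. repeat split; lra. unfold Rminus. field. lra. }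
  assert (H := is_derive_plus _ _ _ _ _ H1 H2).
  unfold dL. replace (- / 2 * (ln (1 - x) / x + ln x / (1 - x))) with
    (plus (- ln (1 - x) / x) (/2 * (/ x * ln (1 - x) - ln x / (1 - x)))).
  exact H.
  unfold plus; simpl. field. lra.
Qed.

Lemma L_cont_int x : 0 < x < 1 -> continuity_pt RogersL x.
Proof.
  intro Hx. apply continuity_pt_filterlim. apply (ex_derive_continuous RogersL).
  exists (dL x). apply L_derive. exact Hx.
Qed.

Lemma L_zero : RogersL 0 = 0.
Proof.
  unfold RogersL. rewrite ln_nonpos by lra. rewrite Li2_PS, PSeries_incr_1. ring.
Qed.

Lemma Li2_cont0 : continuity_pt Li2 0.
Proof.
  apply continuity_pt_filterlim. apply (ex_derive_continuous Li2).
  exists (PSeries b1 0). apply Li2_derive_PS. lra.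
Qed.

Lemma L_cont0 : continuity_pt RogersL 0.
Proof.
  apply continuity_pt_ext with (fun x => Li2 x + / 2 * lnln x).
  { intro x. symmetry. apply RogersL_eq. }
  apply continuity_pt_plus. apply Li2_cont0.
  apply continuity_pt_scal. apply lnln_cont0_pt.
Qed.
Lemma const_lemma (F : R -> R) b : 0 < b ->
  (forall t, 0 < t < b -> is_derive F t 0) -> continuity_pt F 0 ->
  forall x, 0 <= x < b -> F x = F 0.
Proof.
  intros Hb Hd Hc x Hx.
  destruct (Req_dec x 0) as [->|Hx0]. reflexivity.
  destruct (MVT_gen F 0 x (fun _ => 0)) as [c [Hc1 Hc2]].
  - intros t Ht. rewrite Rmin_left, Rmax_right in Ht by lra. apply Hd. lra.
  - intros t Ht. rewrite Rmin_left, Rmax_right in Ht by lra.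
    destruct (Req_dec t 0) as [->|Ht0]. exact Hc.
    apply continuity_pt_filterlim. apply (ex_derive_continuous F).
    exists 0. apply Hd. lra.
  - lra.
Qed.

Lemma ln_div' a b : 0 < a -> 0 < b -> ln (a / b) = ln a - ln b.
Proof. intros. unfold Rdiv. rewrite ln_mult, ln_Rinv; try apply Rinv_0_lt_compat; lra. Qed.

Lemma L_comp_derive (g : R -> R) x dg : is_derive g x dg -> 0 < g x < 1 ->
  is_derive (fun t => RogersL (g t)) x (dg * dL (g x)).
Proof.
  intros Hg H. exact (is_derive_comp RogersL g x _ _ (L_derive _ H) Hg).
Qed.

Lemma abel5 x y : 0 < x < 1 -> 0 < y < 1 ->
  RogersL x + RogersL y = RogersL (x * y) + RogersL (x * (1 - y) / (1 - x * y))
    + RogersL (y * (1 - x) / (1 - x * y)).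
Proof.
  intros Hx Hy.
  set (F := fun t => RogersL t + RogersL y - RogersL (t * y)
     - RogersL (t * (1 - y) / (1 - t * y)) - RogersL (y * (1 - t) / (1 - t * y))).
  assert (HF0 : F 0 = 0).
  { unfold F.
    assert (e2 : 0 * (1 - y) / (1 - 0 * y) = 0) by field.
    assert (e3 : y * (1 - 0) / (1 - 0 * y) = y) by field.
    rewrite e2, e3, Rmult_0_l, L_zero. ring. }
  assert (Hd : forall t, 0 < t < 1 -> is_derive F t 0).
  { intros t Ht.
    assert (Hty : 0 < t * y < 1) by nra.
    assert (P1 : 0 < 1 - t * y) by nra.
    assert (Hu : 0 < t * (1 - y) / (1 - t * y) < 1).
    { split. apply Rdiv_lt_0_compat; nra.
      apply (Rmult_lt_reg_r (1 - t * y)). lra. unfold Rdiv. rewrite Rmult_assoc, Rinv_l by lra. nra. }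
    assert (Hv : 0 < y * (1 - t) / (1 - t * y) < 1).
    { split. apply Rdiv_lt_0_compat; nra.
      apply (Rmult_lt_reg_r (1 - t * y)). lra. unfold Rdiv. rewrite Rmult_assoc, Rinv_l by lra. nra. }
    assert (D1 := L_derive t Ht).
    assert (D2 := L_comp_derive (fun t => t * y) t y ltac:(auto_derive; [auto | ring]) Hty).
    assert (D3 := L_comp_derive (fun t => t * (1 - y) / (1 - t * y)) t ((1 - y) / (1 - t * y) ^ 2)
       ltac:(auto_derive; [lra | field; lra]) Hu).
    assert (D4 := L_comp_derive (fun t => y * (1 - t) / (1 - t * y)) t (y * (y - 1) / (1 - t * y) ^ 2)
       ltac:(auto_derive; [lra | field; lra]) Hv).
    assert (D0 := is_derive_const (K := R_AbsRing) (RogersL y) t).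
    assert (H := is_derive_minus _ _ _ _ _ (is_derive_minus _ _ _ _ _ (is_derive_minus _ _ _ _ _
                  (is_derive_plus _ _ _ _ _ D1 D0) D2) D3) D4).
    unfold F. eapply is_derive_ext. 2: refine (eq_ind _ (fun z => is_derive _ t z) H _ _).
    { intro s. simpl. unfold minus, plus, opp; simpl. ring. }
    unfold minus, plus, opp, zero; simpl. unfold dL.
    replace (1 - t * y) with (1 - t * y) by ring.
    assert (E1 : 1 - t * (1 - y) / (1 - t * y) = (1 - t) / (1 - t * y)) by (field; lra).
    assert (E2 : 1 - y * (1 - t) / (1 - t * y) = (1 - y) / (1 - t * y)) by (field; lra).
    rewrite E1, E2.
    rewrite (ln_div' (t * (1 - y))), (ln_div' (y * (1 - t))), (ln_div' (1 - t)), (ln_div' (1 - y))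
      by nra.
    rewrite !ln_mult by nra.
    field. repeat split; nra. }
  assert (Hc : continuity_pt F 0).
  { unfold F.
    assert (Cg : forall g : R -> R, (forall s, -1 < s < 1 -> ex_derive g s) -> continuity_pt g 0).
    { intros g Hg. apply continuity_pt_filterlim. apply (ex_derive_continuous g). apply Hg. lra. }
    repeat apply continuity_pt_minus.
    - apply continuity_pt_plus. exact L_cont0. apply continuity_pt_const. intros a b; reflexivity.
    - apply (continuity_pt_comp (fun t => t * y) RogersL).
      apply Cg. intros; auto_derive; auto. rewrite Rmult_0_l. exact L_cont0.
    - apply (continuity_pt_comp (fun t => t * (1 - y) / (1 - t * y)) RogersL).
      apply Cg. intros s Hs; auto_derive; nra.
      unfold comp. rewrite Rmult_0_l, Rdiv_0_l. exact L_cont0.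
    - apply (continuity_pt_comp (fun t => y * (1 - t) / (1 - t * y)) RogersL).
      apply Cg. intros s Hs; auto_derive; nra.
      replace (y * (1 - 0) / (1 - 0 * y)) with y by field. apply L_cont_int; exact Hy. }
  assert (HFx := const_lemma F 1 ltac:(lra) Hd Hc x ltac:(lra)).
  rewrite HF0 in HFx. unfold F in HFx. lra.
Qed.

Lemma refl_const x : 0 < x < 1 -> RogersL x + RogersL (1 - x) = RogersL (/2) + RogersL (/2).
Proof.
  intro Hx.
  set (F := fun t => RogersL t + RogersL (1 - t)).
  assert (Hd : forall t, 0 < t < 1 -> is_derive F t 0).
  { intros t Ht.
    assert (D1 := L_derive t Ht).
    assert (D2 := L_comp_derive (fun t => 1 - t) t (-1) ltac:(auto_derive; [auto | ring]) ltac:(lra)).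
    assert (H := is_derive_plus _ _ _ _ _ D1 D2).
    unfold F. refine (eq_ind _ (fun z => is_derive _ t z) H _ _).
    unfold plus; simpl. unfold dL. replace (1 - (1 - t)) with t by ring. field. lra. }
  assert (forall a b, 0 < a < 1 -> 0 < b < 1 -> F a = F b).
  { intros a b Ha Hb.
    destruct (MVT_gen F a b (fun _ => 0)) as [c [Hc1 Hc2]].
    - intros t Ht. apply Hd. split.
      apply Rle_lt_trans with (Rmin a b); [apply Rmin_glb; lra | lra].
      apply Rlt_le_trans with (Rmax a b); [lra | apply Rmax_lub; lra].
    - intros t Ht. apply continuity_pt_filterlim. apply (ex_derive_continuous F).
      exists 0. apply Hd. split.
      apply Rlt_le_trans with (Rmin a b); [apply Rmin_glb_lt; lra | lra].
      apply Rle_lt_trans with (Rmax a b); [lra | apply Rmax_lub_lt; lra].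
    - lra. }
  assert (E := H x (/2) Hx ltac:(lra)). unfold F in E.
  replace (1 - /2) with (/2) in E by field. exact E.
Qed.
Definition AI (n : nat) : R := RInt (fun x => cos x ^ (2 * n)) 0 (PI / 2).
Definition BI (n : nat) : R := RInt (fun x => x ^ 2 * cos x ^ (2 * n)) 0 (PI / 2).

Lemma cont_cpow n x : continuous (fun x => cos x ^ n) x.
Proof. apply (ex_derive_continuous (fun x => cos x ^ n)). auto_derive. trivial. Qed.

Lemma cont_xcpow n x : continuous (fun x => x ^ 2 * cos x ^ n) x.
Proof. apply (ex_derive_continuous (fun x => x ^ 2 * cos x ^ n)). auto_derive. trivial. Qed.

Lemma isA n : is_RInt (fun x => cos x ^ (2 * n)) 0 (PI / 2) (AI n).
Proof. unfold AI. apply (RInt_correct (V := R_CompleteNormedModule)), (ex_RInt_continuous (V := R_CompleteNormedModule)). intros; apply cont_cpow. Qed.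

Lemma isB n : is_RInt (fun x => x ^ 2 * cos x ^ (2 * n)) 0 (PI / 2) (BI n).
Proof. unfold BI. apply (RInt_correct (V := R_CompleteNormedModule)), (ex_RInt_continuous (V := R_CompleteNormedModule)). intros; apply cont_xcpow. Qed.

Lemma is_derive_cos' x : is_derive cos x (- sin x).
Proof. apply is_derive_Reals. apply derivable_pt_lim_cos. Qed.

Lemma is_derive_sin' x : is_derive sin x (cos x).
Proof. apply is_derive_Reals. apply derivable_pt_lim_sin. Qed.

Lemma D_cpow k x : is_derive (fun x => cos x ^ S k) x (INR (S k) * - sin x * cos x ^ k).
Proof.
  assert (H := is_derive_pow cos (S k) x (- sin x) (is_derive_cos' x)).
  simpl pred in H. exact H.
Qed.

Lemma pow2S c m : c ^ (2 * S m) = c ^ (2 * m) * (c * c).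
Proof. replace (2 * S m)%nat with (2 * m + 2)%nat by lia. rewrite pow_add. simpl. ring. Qed.

Lemma pow2S1 c m : c ^ S (2 * m) = c * c ^ (2 * m).
Proof. reflexivity. Qed.

Lemma sin_sq x : sin x * sin x = 1 - cos x * cos x.
Proof. pose proof (sin2_cos2 x). unfold Rsqr in H. lra. Qed.

Lemma wallis m : 2 * (INR m + 1) * AI (S m) = (2 * INR m + 1) * AI m.
Proof.
  set (G := fun x => sin x * cos x ^ S (2 * m)).
  assert (HD : forall x, is_derive G x ((2 * (INR m + 1)) * cos x ^ (2 * S m) + (- (2 * INR m + 1)) * cos x ^ (2 * m))).
  { intro x. assert (H := is_derive_mult _ _ x _ _ (is_derive_sin' x) (D_cpow (2 * m) x) (fun a b => Rmult_comm a b)).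
    refine (eq_ind _ (fun z => is_derive G x z) H _ _).
    transitivity (cos x * cos x ^ S (2*m) + sin x * (INR (S (2*m)) * - sin x * cos x ^ (2*m))). reflexivity.
    rewrite pow2S, pow2S1, S_INR, mult_INR. simpl INR.
    apply Rminus_diag_uniq.
    transitivity (- (2 * INR m + 1) * cos x ^ (2 * m) * (sin x * sin x - (1 - cos x * cos x))). ring.
    rewrite sin_sq. ring. }
  assert (H1 : is_RInt (fun x => (2 * (INR m + 1)) * cos x ^ (2 * S m) + (- (2 * INR m + 1)) * cos x ^ (2 * m)) 0 (PI/2)
     ((2 * (INR m + 1)) * AI (S m) + (- (2 * INR m + 1)) * AI m)).
  { exact (is_RInt_plus _ _ _ _ _ _ (is_RInt_scal _ _ _ _ _ (isA (S m))) (is_RInt_scal _ _ _ _ _ (isA m))). }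
  assert (H2 := is_RInt_derive G _ 0 (PI/2) (fun x _ => HD x)).
  assert (H2' : is_RInt (fun x => (2 * (INR m + 1)) * cos x ^ (2 * S m) + (- (2 * INR m + 1)) * cos x ^ (2 * m)) 0 (PI/2) 0).
  { assert (E0 : minus (G (PI/2)) (G 0) = 0).
    { unfold G, minus, plus, opp; simpl. rewrite cos_PI2, sin_0. simpl. ring. }
    refine (eq_ind _ (fun z => is_RInt _ 0 (PI/2) z) (H2 _) _ E0). intros x _.
    apply (ex_derive_continuous (fun x => (2 * (INR m + 1)) * cos x ^ (2 * S m) + (- (2 * INR m + 1)) * cos x ^ (2 * m))).
    auto_derive. trivial. }
  assert (U1 := is_RInt_unique (V:=R_CompleteNormedModule) _ _ _ _ H1).
  assert (U2 := is_RInt_unique (V:=R_CompleteNormedModule) _ _ _ _ H2'). rewrite U2 in U1. lra.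
Qed.

Lemma powS c k : c ^ S k = c * c ^ k.
Proof. reflexivity. Qed.

Lemma isA' m : is_RInt (fun x => cos x ^ S (S (2 * m))) 0 (PI / 2) (AI (S m)).
Proof. replace (S (S (2 * m))) with (2 * S m)%nat by lia. apply isA. Qed.

Lemma isB' m : is_RInt (fun x => x ^ 2 * cos x ^ S (S (2 * m))) 0 (PI / 2) (BI (S m)).
Proof. replace (S (S (2 * m))) with (2 * S m)%nat by lia. apply isB. Qed.

Lemma matsuoka m : AI (S m) + 2 * (INR m + 1) ^ 2 * BI (S m) - (INR m + 1) * (2 * INR m + 1) * BI m = 0.
Proof.
  set (G := fun x => x * cos x ^ S (S (2 * m)) + (INR m + 1) * (x * x * (sin x * cos x ^ S (2 * m)))).
  set (g := fun x => cos x ^ S (S (2 * m)) + (2 * (INR m + 1) ^ 2) * (x ^ 2 * cos x ^ S (S (2 * m)))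
            + (- ((INR m + 1) * (2 * INR m + 1))) * (x ^ 2 * cos x ^ (2 * m))).
  assert (HD : forall x, is_derive G x (g x)).
  { intro x.
    assert (Hid := is_derive_id x).
    assert (T1 := is_derive_mult _ _ x _ _ Hid (D_cpow (S (2 * m)) x) (fun a b => Rmult_comm a b)).
    assert (Hxx := is_derive_mult _ _ x _ _ Hid Hid (fun a b => Rmult_comm a b)).
    assert (Hsc := is_derive_mult _ _ x _ _ (is_derive_sin' x) (D_cpow (2 * m) x) (fun a b => Rmult_comm a b)).
    assert (T2 := is_derive_scal _ x (INR m + 1) _ (is_derive_mult _ _ x _ _ Hxx Hsc (fun a b => Rmult_comm a b))).
    assert (H := is_derive_plus _ _ x _ _ T1 T2).
    refine (eq_ind _ (fun z => is_derive G x z) H _ _).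
    unfold g. pose proof (sin_sq x) as Hs.
    rewrite (S_INR (S (2 * m))), (S_INR (2 * m)), mult_INR.
    rewrite !powS.
    revert Hs. generalize (cos x ^ (2 * m)) (cos x) (sin x). intros p c s Hs.
    unfold plus, mult, scal, one; simpl. nsatz. }
  assert (H1 := is_RInt_plus _ _ _ _ _ _ (is_RInt_plus _ _ _ _ _ _ (isA' m) (is_RInt_scal _ _ _ (2 * (INR m + 1) ^ 2) _ (isB' m)))
                 (is_RInt_scal _ _ _ (- ((INR m + 1) * (2 * INR m + 1))) _ (isB m))).
  assert (E0 : minus (G (PI/2)) (G 0) = 0).
  { unfold G, minus, plus, opp; simpl. rewrite cos_PI2, sin_0. simpl. ring. }
  assert (H2 : is_RInt g 0 (PI/2) 0).
  { refine (eq_ind _ (fun z => is_RInt _ 0 (PI/2) z) (is_RInt_derive G g 0 (PI/2) (fun x _ => HD x) _) _ E0).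
    intros x _. apply (ex_derive_continuous g). unfold g. auto_derive. trivial. }
  assert (U1 := is_RInt_unique (V:=R_CompleteNormedModule) _ _ _ _ H1).
  assert (U2 := is_RInt_unique (V:=R_CompleteNormedModule) _ _ _ _ H2).
  assert (U3 : RInt g 0 (PI / 2) = AI (S m) + 2 * (INR m + 1) ^ 2 * BI (S m)
     + - ((INR m + 1) * (2 * INR m + 1)) * BI m) by exact U1.
  rewrite U2 in U3. lra.
Qed.

Lemma A0 : AI 0 = PI / 2.
Proof.
  assert (H := is_RInt_derive (fun x => x) (fun x => cos x ^ (2 * 0)) 0 (PI/2)
     (fun x _ => is_derive_id x) (fun x _ => cont_cpow _ x)).
  assert (U := is_RInt_unique (V:=R_CompleteNormedModule) _ _ _ _ H).
  unfold AI. rewrite U. unfold minus, plus, opp; simpl. ring.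
Qed.

Lemma B0 : BI 0 = PI ^ 3 / 24.
Proof.
  assert (HD : forall x, is_derive (fun x => x ^ 3 / 3) x (x ^ 2 * cos x ^ (2 * 0))).
  { intro x. auto_derive. trivial. simpl. field. }
  assert (H := is_RInt_derive _ _ 0 (PI/2) (fun x _ => HD x) (fun x _ => cont_xcpow _ x)).
  assert (U := is_RInt_unique (V:=R_CompleteNormedModule) _ _ _ _ H).
  unfold BI. rewrite U. unfold minus, plus, opp; simpl. field.
Qed.

Lemma AI_pos n : 0 < AI n.
Proof.
  induction n.
  - rewrite A0. pose proof PI_RGT_0. lra.
  - pose proof (wallis n). pose proof (pos_INR n).
    assert (AI (S n) = (2 * INR n + 1) * AI n / (2 * (INR n + 1))) by (rewrite <- H; field; lra).
    rewrite H1. apply Rdiv_lt_0_compat; [apply Rmult_lt_0_compat|]; lra.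
Qed.

Lemma cos_even_nonneg x n : 0 <= cos x ^ (2 * n).
Proof. rewrite pow_mult. apply pow_le. nra. Qed.

Lemma x_le_3sin x : 0 <= x <= PI / 2 -> x <= 3 * sin x.
Proof.
  intro Hx. pose proof PI_4.
  assert (H1 := pre_sin_bound x 0 ltac:(lra) ltac:(lra)).
  destruct H1 as [H1 _].
  assert (E : sin_approx x (2 * 0 + 1) = x - x ^ 3 / 6).
  { unfold sin_approx. simpl. unfold sin_term. simpl. field. }
  rewrite E in H1. nra.
Qed.

Lemma BI_nonneg n : 0 <= BI n.
Proof.
  assert (H0 : is_RInt (fun _ => 0) 0 (PI/2) 0).
  { assert (H := is_RInt_const 0 (PI/2) 0). unfold scal in H; simpl in H.
    unfold mult in H; simpl in H. rewrite Rmult_0_r in H. exact H. }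
  apply (is_RInt_le (fun _ => 0) (fun x => x ^ 2 * cos x ^ (2 * n)) 0 (PI/2)).
  pose proof PI_RGT_0; lra. exact H0. apply isB.
  intros x _. apply Rmult_le_pos. apply pow2_ge_0. apply cos_even_nonneg.
Qed.

Lemma BI_bound n : BI n <= 9 * (AI n - AI (S n)).
Proof.
  assert (H := is_RInt_scal _ _ _ 9 _ (is_RInt_minus _ _ _ _ _ _ (isA n) (isA (S n)))).
  change (is_RInt (fun y => scal 9 (minus (cos y ^ (2 * n)) (cos y ^ (2 * S n)))) 0 (PI/2) (9 * (AI n - AI (S n)))) in H.
  apply (is_RInt_le (fun x => x ^ 2 * cos x ^ (2 * n)) _ 0 (PI/2) _ _ ltac:(pose proof PI_RGT_0; lra) (isB n) H).
  intros x Hx. change (x ^ 2 * cos x ^ (2 * n) <= 9 * (cos x ^ (2 * n) + - cos x ^ (2 * S n))).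
  rewrite pow2S.
  assert (0 <= sin x) by (apply sin_ge_0; pose proof PI2_Rlt_PI; lra).
  pose proof (x_le_3sin x ltac:(lra)).
  pose proof (cos_even_nonneg x n).
  assert (x ^ 2 <= 9 * (sin x * sin x)) by nra.
  replace (9 * (cos x ^ (2 * n) + - (cos x ^ (2 * n) * (cos x * cos x))))
    with (9 * (sin x * sin x) * cos x ^ (2 * n)) by (rewrite sin_sq; ring).
  apply Rmult_le_compat_r; lra.
Qed.

Definition rr (n : nat) : R := BI n / AI n.

Lemma rr_bound n : 0 <= rr n <= 9 / (2 * INR n + 2).
Proof.
  pose proof (AI_pos n). pose proof (wallis n). pose proof (pos_INR n).
  pose proof (BI_nonneg n). pose proof (BI_bound n).
  unfold rr. split. apply Rdiv_le_0_compat; lra.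
  assert (AI (S n) = (2 * INR n + 1) * AI n / (2 * (INR n + 1))) by (rewrite <- H0; field; lra).
  rewrite H4 in H3.
  apply (Rmult_le_reg_r (AI n)). lra. unfold Rdiv. rewrite Rmult_assoc, Rinv_l, Rmult_1_r by lra.
  apply Rle_trans with (1 := H3). right. field. lra.
Qed.

Lemma rr_step m : / (INR m + 1) ^ 2 = 2 * rr m - 2 * rr (S m).
Proof.
  pose proof (AI_pos m). pose proof (AI_pos (S m)). pose proof (wallis m). pose proof (matsuoka m).
  pose proof (pos_INR m).
  unfold rr.
  assert (E : AI (S m) = (2 * INR m + 1) * AI m / (2 * (INR m + 1))) by (rewrite <- H1; field; lra).
  assert (E2 : BI m = (AI (S m) + 2 * (INR m + 1) ^ 2 * BI (S m)) / ((INR m + 1) * (2 * INR m + 1))).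
  { field_simplify_eq. lra. lra. }
  rewrite E2. rewrite E. field. repeat split; try lra. 
Qed.

Lemma basel_partial N : sum_n (fun k => / (INR (S k)) ^ 2) N = PI ^ 2 / 6 - 2 * rr (S N).
Proof.
  induction N.
  - rewrite sum_O. pose proof (rr_step 0). simpl INR in H. 
    unfold rr at 1 in H. rewrite A0, B0 in H. pose proof PI_RGT_0.
    replace (/ INR 1 ^ 2) with (/ (0 + 1) ^ 2) by (simpl; field).
    rewrite H. assert (PI ^ 3 / 24 / (PI / 2) = PI ^ 2 / 12) by (field; lra). lra.
  - rewrite sum_Sn, IHN. pose proof (rr_step (S N)).
    rewrite (S_INR (S N)). rewrite H. unfold plus; simpl. ring.
Qed.

Lemma basel : is_series (fun k => / (INR (S k)) ^ 2) (PI ^ 2 / 6).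
Proof.
  assert (L : is_lim_seq (sum_n (fun k => / (INR (S k)) ^ 2)) (PI ^ 2 / 6)).
  { apply is_lim_seq_ext with (fun N => PI ^ 2 / 6 - 2 * rr (S N)).
    { intro N. symmetry. apply basel_partial. }
    assert (Z : is_lim_seq (fun N => 2 * rr (S N)) 0).
    { apply is_lim_seq_le_le with (fun _ => 0) (fun N => 18 * / INR (S (S N))).
      - intro N. pose proof (rr_bound (S N)). rewrite !S_INR in *. pose proof (pos_INR N).
        split. lra. replace (18 * / (INR N + 1 + 1)) with (2 * (9 / (2 * (INR N + 1) + 2)) * 2 * ((INR N + 1 + 1) * / (INR N + 1 + 1))) by (field; lra).
        rewrite Rinv_r by lra. lra.
      - apply is_lim_seq_const.
      - assert (H := is_lim_seq_mult' (fun _ => 18) _ 18 0 (is_lim_seq_const 18) lim_invSS).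
        rewrite Rmult_0_r in H. exact H. }
    assert (H := is_lim_seq_minus' _ _ (PI ^ 2 / 6) 0 (is_lim_seq_const _) Z).
    rewrite Rminus_0_r in H. exact H. }
  exact L.
Qed.

Lemma Li2_1 : Li2 1 = PI ^ 2 / 6.
Proof.
  unfold Li2. apply is_series_unique.
  apply is_series_ext with (fun k => / (INR (S k)) ^ 2).
  { intro n. rewrite pow1. unfold Rdiv. rewrite Rmult_1_l. reflexivity. }
  apply basel.
Qed.

Lemma Li2_abel : filterlim Li2 (at_left 1) (locally (PI ^ 2 / 6)).
Proof.
  rewrite <- Li2_1.
  assert (Hr : CV_radius (PS_incr_1 a1) = 1) by (rewrite CV_radius_incr_1; exact CV_a1).
  assert (Hex : ex_pseries (PS_incr_1 a1) 1).
  { apply ex_pseries_incr_1. exists (PI ^ 2 / 6).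
    apply is_series_ext with (fun k => / (INR (S k)) ^ 2).
    { intro n. change (/ INR (S n) ^ 2 = 1 ^ n * a1 n). rewrite pow1, Rmult_1_l. reflexivity. }
    apply basel. }
  assert (H := Abel (PS_incr_1 a1) ltac:(rewrite Hr; simpl; lra) ltac:(rewrite Hr; exact I)
                   ltac:(rewrite Hr; exact Hex)).
  rewrite Hr in H. simpl in H. rewrite <- Li2_PS in H.
  eapply filterlim_ext. 2: exact H.
  intro x. symmetry. apply Li2_PS.
Qed.

Lemma eps_eq a b : (forall eps, 0 < eps -> Rabs (a - b) < 3 * eps) -> a = b.
Proof.
  intro H. destruct (Req_dec a b) as [e|ne]. exact e.
  exfalso. assert (Hp : 0 < Rabs (a - b)) by (apply Rabs_pos_lt; lra).
  specialize (H (Rabs (a - b) / 3) ltac:(lra)). lra.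
Qed.

Lemma L_half : RogersL (/ 2) + RogersL (/ 2) = PI ^ 2 / 6.
Proof.
  apply eps_eq. intros eps He.
  destruct (Li2_cont0 eps He) as [d1 [Hd1 H1]].
  destruct (lnln_cont0 eps He) as [d2 [Hd2 H2]].
  assert (HP : locally (PI ^ 2 / 6) (fun y => Rabs (y - PI ^ 2 / 6) < eps)).
  { exists (mkposreal eps He). intros y Hy. exact Hy. }
  destruct (Li2_abel _ HP) as [d3 H3].
  set (x := Rmin (Rmin d1 d2) (Rmin d3 (/2)) / 2).
  assert (Hx0 : 0 < x).
  { unfold x. apply Rdiv_lt_0_compat; [|lra]. 
    apply Rmin_glb_lt; apply Rmin_glb_lt; try lra. apply cond_pos. }
  assert (Hm1 := Rmin_l (Rmin d1 d2) (Rmin d3 (/2))).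
  assert (Hm2 := Rmin_r (Rmin d1 d2) (Rmin d3 (/2))).
  assert (Hxd1 : x < d1) by (unfold x; pose proof (Rmin_l d1 d2); lra).
  assert (Hxd2 : x < d2) by (unfold x; pose proof (Rmin_r d1 d2); lra).
  assert (Hxd3 : x < d3) by (unfold x in *; pose proof (Rmin_l d3 (/2)); pose proof (cond_pos d3); lra).
  assert (Hxh : x < /2) by (unfold x in *; pose proof (Rmin_r d3 (/2)); pose proof (cond_pos d3); lra).
  rewrite <- (refl_const x) by lra.
  rewrite !RogersL_eq, lnln_sym.
  assert (A1 : Rabs (Li2 x) < eps).
  { assert (Li2 0 = 0) by (rewrite Li2_PS, PSeries_incr_1; ring).
    assert (T : R_dist (Li2 x) (Li2 0) < eps).
    { apply H1. split. split. exact I. lra. change (Rabs (x - 0) < d1). rewrite Rminus_0_r, Rabs_pos_eq; lra. }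
    change (Rabs (Li2 x - Li2 0) < eps) in T. rewrite H, Rminus_0_r in T. exact T. }
  assert (A2 : Rabs (lnln x) < eps) by (apply H2; rewrite Rabs_pos_eq; lra).
  assert (A3 : Rabs (Li2 (1 - x) - PI ^ 2 / 6) < eps).
  { apply H3. change (Rabs (1 - x - 1) < d3). replace (1 - x - 1) with (- x) by ring.
    rewrite Rabs_Ropp, Rabs_pos_eq; lra. lra. }
  apply Rabs_def1.
  - apply Rabs_def2 in A1. apply Rabs_def2 in A2. apply Rabs_def2 in A3. lra.
  - apply Rabs_def2 in A1. apply Rabs_def2 in A2. apply Rabs_def2 in A3. lra.
Qed.

Lemma L_refl x : 0 < x < 1 -> RogersL x + RogersL (1 - x) = PI ^ 2 / 6.
Proof. intro Hx. rewrite refl_const by exact Hx. apply L_half. Qed.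

Lemma div_eq a b d : 0 < d -> a - b * d = 0 -> a / d = b.
Proof. intros Hd H. apply Rminus_diag_uniq in H. rewrite H. field. lra. Qed.

Lemma prod_lt1 a b : 0 < a < 1 -> 0 < b < 1 -> 0 < 1 - a * b.
Proof. intros. nra. Qed.

Definition dP6 (x : R) : R := 6 * x ^ 5 + 5 * x ^ 4 - 6 * x ^ 2 + 2.

Lemma P6_derive x : is_derive P6 x (dP6 x).
Proof. unfold P6, dP6. auto_derive. trivial. ring. Qed.

Lemma P6_mvt a b : a < b -> exists c, a <= c <= b /\ P6 b - P6 a = dP6 c * (b - a).
Proof.
  intro Hab. destruct (MVT_gen P6 a b dP6) as [c [Hc E]].
  - intros. apply P6_derive.
  - intros. apply continuity_pt_filterlim. apply (ex_derive_continuous P6). exists (dP6 x). apply P6_derive.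
  - rewrite Rmin_left, Rmax_right in Hc by lra. exists c. split; assumption.
Qed.

Lemma dP6_pos c : 0 <= c <= 1 -> 0 < dP6 c.
Proof.
  intro Hc. unfold dP6. assert (0 <= c ^ 5) by (apply pow_le; lra).
  assert (0 <= (c ^ 2 - 3/5) ^ 2) by apply pow2_ge_0.
  replace (c ^ 4) with ((c ^ 2) ^ 2) by ring. nra.
Qed.

Lemma dP6_neg c : -2 <= c <= -1 -> dP6 c < 0.
Proof.
  intro Hc. unfold dP6.
  assert (H2 : 1 <= c * c) by nra.
  assert (H4 : 1 <= c ^ 4).
  { replace (c ^ 4) with ((c * c) * (c * c)) by ring. nra. }
  replace (6 * c ^ 5 + 5 * c ^ 4) with (c ^ 4 * (6 * c + 5)) by ring.
  assert (c ^ 4 * (6 * c + 5) <= 0) by nra.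
  nra.
Qed.

Lemma P6_incr a b : 0 <= a -> a < b -> b <= 1 -> P6 a < P6 b.
Proof.
  intros. destruct (P6_mvt a b) as [c [Hc E]]; [lra|].
  pose proof (dP6_pos c ltac:(lra)). nra.
Qed.

Lemma P6_inj_neg a b : -2 <= a <= -1 -> -2 <= b <= -1 -> P6 a = P6 b -> a = b.
Proof.
  intros Ha Hb E. destruct (Rtotal_order a b) as [H|[H|H]]; [|exact H|].
  - destruct (P6_mvt a b H) as [c [Hc E2]]. pose proof (dP6_neg c ltac:(lra)). nra.
  - destruct (P6_mvt b a H) as [c [Hc E2]]. pose proof (dP6_neg c ltac:(lra)). nra.
Qed.

Theorem mainTheorem5 (x0 x1 : R) :
  0 < x0 < 1 -> P6 x0 = 0 ->
  -2 < x1 < -1 -> P6 x1 = 0 ->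
  RogersL x0 + RogersL (1 / (1 - x1)) = 4 * PI ^ 2 / 21.
Proof.
  intros Hx0 HP0 Hx1 HP1.
  assert (Hlo : (70022/100000) < x0).
  { destruct (Rlt_le_dec (70022/100000) x0) as [h|h]. exact h. exfalso.
    destruct (Req_dec x0 (70022/100000)) as [e|ne].
    - rewrite e in HP0. unfold P6 in HP0. lra.
    - pose proof (P6_incr x0 (70022/100000) ltac:(lra) ltac:(lra) ltac:(lra)) as HH. rewrite HP0 in HH. unfold P6 in HH. lra. }
  assert (Hhi : x0 < (70023/100000)).
  { destruct (Rlt_le_dec x0 (70023/100000)) as [h|h]. exact h. exfalso.
    destruct (Req_dec x0 (70023/100000)) as [e|ne].
    - rewrite e in HP0. unfold P6 in HP0. lra.
    - pose proof (P6_incr (70023/100000) x0 ltac:(lra) ltac:(lra) ltac:(lra)) as HH. rewrite HP0 in HH. unfold P6 in HH. lra. }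
  assert (p1 : (70022/100000) ^ 1 <= x0 ^ 1 <= (70023/100000) ^ 1) by (simpl; lra).
  assert (p2 : (70022/100000) ^ 2 <= x0 ^ 2 <= (70023/100000) ^ 2).
  { replace (x0 ^ 2) with (x0 ^ 1 * x0) by ring.
    replace ((70022/100000) ^ 2) with ((70022/100000) ^ 1 * (70022/100000)) by ring.
    replace ((70023/100000) ^ 2) with ((70023/100000) ^ 1 * (70023/100000)) by ring.
    assert (0 < (70022/100000) ^ 1) by (apply pow_lt; lra).
    split; apply Rmult_le_compat; lra. }
  assert (p3 : (70022/100000) ^ 3 <= x0 ^ 3 <= (70023/100000) ^ 3).
  { replace (x0 ^ 3) with (x0 ^ 2 * x0) by ring.
    replace ((70022/100000) ^ 3) with ((70022/100000) ^ 2 * (70022/100000)) by ring.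
    replace ((70023/100000) ^ 3) with ((70023/100000) ^ 2 * (70023/100000)) by ring.
    assert (0 < (70022/100000) ^ 2) by (apply pow_lt; lra).
    split; apply Rmult_le_compat; lra. }
  assert (p4 : (70022/100000) ^ 4 <= x0 ^ 4 <= (70023/100000) ^ 4).
  { replace (x0 ^ 4) with (x0 ^ 3 * x0) by ring.
    replace ((70022/100000) ^ 4) with ((70022/100000) ^ 3 * (70022/100000)) by ring.
    replace ((70023/100000) ^ 4) with ((70023/100000) ^ 3 * (70023/100000)) by ring.
    assert (0 < (70022/100000) ^ 3) by (apply pow_lt; lra).
    split; apply Rmult_le_compat; lra. }
  assert (p5 : (70022/100000) ^ 5 <= x0 ^ 5 <= (70023/100000) ^ 5).
  { replace (x0 ^ 5) with (x0 ^ 4 * x0) by ring.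
    replace ((70022/100000) ^ 5) with ((70022/100000) ^ 4 * (70022/100000)) by ring.
    replace ((70023/100000) ^ 5) with ((70023/100000) ^ 4 * (70023/100000)) by ring.
    assert (0 < (70022/100000) ^ 4) by (apply pow_lt; lra).
    split; apply Rmult_le_compat; lra. }
  assert (p6 : (70022/100000) ^ 6 <= x0 ^ 6 <= (70023/100000) ^ 6).
  { replace (x0 ^ 6) with (x0 ^ 5 * x0) by ring.
    replace ((70022/100000) ^ 6) with ((70022/100000) ^ 5 * (70022/100000)) by ring.
    replace ((70023/100000) ^ 6) with ((70023/100000) ^ 5 * (70023/100000)) by ring.
    assert (0 < (70022/100000) ^ 5) by (apply pow_lt; lra).
    split; apply Rmult_le_compat; lra. }
  assert (p7 : (70022/100000) ^ 7 <= x0 ^ 7 <= (70023/100000) ^ 7).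
  { replace (x0 ^ 7) with (x0 ^ 6 * x0) by ring.
    replace ((70022/100000) ^ 7) with ((70022/100000) ^ 6 * (70022/100000)) by ring.
    replace ((70023/100000) ^ 7) with ((70023/100000) ^ 6 * (70023/100000)) by ring.
    assert (0 < (70022/100000) ^ 6) by (apply pow_lt; lra).
    split; apply Rmult_le_compat; lra. }
  assert (p8 : (70022/100000) ^ 8 <= x0 ^ 8 <= (70023/100000) ^ 8).
  { replace (x0 ^ 8) with (x0 ^ 7 * x0) by ring.
    replace ((70022/100000) ^ 8) with ((70022/100000) ^ 7 * (70022/100000)) by ring.
    replace ((70023/100000) ^ 8) with ((70023/100000) ^ 7 * (70023/100000)) by ring.
    assert (0 < (70022/100000) ^ 7) by (apply pow_lt; lra).
    split; apply Rmult_le_compat; lra. }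
  assert (p9 : (70022/100000) ^ 9 <= x0 ^ 9 <= (70023/100000) ^ 9).
  { replace (x0 ^ 9) with (x0 ^ 8 * x0) by ring.
    replace ((70022/100000) ^ 9) with ((70022/100000) ^ 8 * (70022/100000)) by ring.
    replace ((70023/100000) ^ 9) with ((70023/100000) ^ 8 * (70023/100000)) by ring.
    assert (0 < (70022/100000) ^ 8) by (apply pow_lt; lra).
    split; apply Rmult_le_compat; lra. }
  assert (p10 : (70022/100000) ^ 10 <= x0 ^ 10 <= (70023/100000) ^ 10).
  { replace (x0 ^ 10) with (x0 ^ 9 * x0) by ring.
    replace ((70022/100000) ^ 10) with ((70022/100000) ^ 9 * (70022/100000)) by ring.
    replace ((70023/100000) ^ 10) with ((70023/100000) ^ 9 * (70023/100000)) by ring.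
    assert (0 < (70022/100000) ^ 9) by (apply pow_lt; lra).
    split; apply Rmult_le_compat; lra. }
  assert (p11 : (70022/100000) ^ 11 <= x0 ^ 11 <= (70023/100000) ^ 11).
  { replace (x0 ^ 11) with (x0 ^ 10 * x0) by ring.
    replace ((70022/100000) ^ 11) with ((70022/100000) ^ 10 * (70022/100000)) by ring.
    replace ((70023/100000) ^ 11) with ((70023/100000) ^ 10 * (70023/100000)) by ring.
    assert (0 < (70022/100000) ^ 10) by (apply pow_lt; lra).
    split; apply Rmult_le_compat; lra. }
  assert (p12 : (70022/100000) ^ 12 <= x0 ^ 12 <= (70023/100000) ^ 12).
  { replace (x0 ^ 12) with (x0 ^ 11 * x0) by ring.
    replace ((70022/100000) ^ 12) with ((70022/100000) ^ 11 * (70022/100000)) by ring.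
    replace ((70023/100000) ^ 12) with ((70023/100000) ^ 11 * (70023/100000)) by ring.
    assert (0 < (70022/100000) ^ 11) by (apply pow_lt; lra).
    split; apply Rmult_le_compat; lra. }
  assert (R0 : RogersL ((2) + (-2) * x0 ^ 1 + (-2) * x0 ^ 2 + (1) * x0 ^ 3 + (2) * x0 ^ 4 + (1) * x0 ^ 5) + RogersL ((-1) + (1) * x0 ^ 1 + (3) * x0 ^ 2 + (-1) * x0 ^ 4 + (-1) * x0 ^ 5) = RogersL ((2) + (-1) * x0 ^ 1 + (-1) * x0 ^ 2 + (-1) * x0 ^ 3) + RogersL ((-1) + (1) * x0 ^ 1 + (2) * x0 ^ 2 + (-1) * x0 ^ 4 + (-1) * x0 ^ 5) + RogersL ((2) * x0 ^ 1 + (1) * x0 ^ 2 + (-2) * x0 ^ 3 + (-2) * x0 ^ 4 + (-1) * x0 ^ 5)).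
  { assert (bX : 0 < ((2) + (-2) * x0 ^ 1 + (-2) * x0 ^ 2 + (1) * x0 ^ 3 + (2) * x0 ^ 4 + (1) * x0 ^ 5) < 1) by (split; lra).
    assert (bY : 0 < ((-1) + (1) * x0 ^ 1 + (3) * x0 ^ 2 + (-1) * x0 ^ 4 + (-1) * x0 ^ 5) < 1) by (split; lra).
    assert (H := abel5 _ _ bX bY).
    assert (bD : 0 < 1 - ((2) + (-2) * x0 ^ 1 + (-2) * x0 ^ 2 + (1) * x0 ^ 3 + (2) * x0 ^ 4 + (1) * x0 ^ 5) * ((-1) + (1) * x0 ^ 1 + (3) * x0 ^ 2 + (-1) * x0 ^ 4 + (-1) * x0 ^ 5)) by nra.
    assert (E1 : ((2) + (-2) * x0 ^ 1 + (-2) * x0 ^ 2 + (1) * x0 ^ 3 + (2) * x0 ^ 4 + (1) * x0 ^ 5) * ((-1) + (1) * x0 ^ 1 + (3) * x0 ^ 2 + (-1) * x0 ^ 4 + (-1) * x0 ^ 5) = ((2) + (-1) * x0 ^ 1 + (-1) * x0 ^ 2 + (-1) * x0 ^ 3)).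
    { apply Rminus_diag_uniq. transitivity (P6 x0 * ((4) + (3) * x0 ^ 1 + (-1) * x0 ^ 2 + (-2) * x0 ^ 3 + (-1) * x0 ^ 4)). unfold P6; ring. rewrite HP0; ring. }
    assert (E2 : ((2) + (-2) * x0 ^ 1 + (-2) * x0 ^ 2 + (1) * x0 ^ 3 + (2) * x0 ^ 4 + (1) * x0 ^ 5) * (1 - ((-1) + (1) * x0 ^ 1 + (3) * x0 ^ 2 + (-1) * x0 ^ 4 + (-1) * x0 ^ 5)) / (1 - ((2) + (-2) * x0 ^ 1 + (-2) * x0 ^ 2 + (1) * x0 ^ 3 + (2) * x0 ^ 4 + (1) * x0 ^ 5) * ((-1) + (1) * x0 ^ 1 + (3) * x0 ^ 2 + (-1) * x0 ^ 4 + (-1) * x0 ^ 5)) = ((-1) + (1) * x0 ^ 1 + (2) * x0 ^ 2 + (-1) * x0 ^ 4 + (-1) * x0 ^ 5)).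
    { apply div_eq. lra. apply Rminus_diag_uniq. transitivity (P6 x0 * ((-7) + (-1) * x0 ^ 1 + (14) * x0 ^ 2 + (9) * x0 ^ 3 + (-6) * x0 ^ 4 + (-12) * x0 ^ 5 + (-4) * x0 ^ 6 + (3) * x0 ^ 7 + (3) * x0 ^ 8 + (1) * x0 ^ 9)). unfold P6; ring. rewrite HP0; ring. }
    assert (E3 : ((-1) + (1) * x0 ^ 1 + (3) * x0 ^ 2 + (-1) * x0 ^ 4 + (-1) * x0 ^ 5) * (1 - ((2) + (-2) * x0 ^ 1 + (-2) * x0 ^ 2 + (1) * x0 ^ 3 + (2) * x0 ^ 4 + (1) * x0 ^ 5)) / (1 - ((2) + (-2) * x0 ^ 1 + (-2) * x0 ^ 2 + (1) * x0 ^ 3 + (2) * x0 ^ 4 + (1) * x0 ^ 5) * ((-1) + (1) * x0 ^ 1 + (3) * x0 ^ 2 + (-1) * x0 ^ 4 + (-1) * x0 ^ 5)) = ((2) * x0 ^ 1 + (1) * x0 ^ 2 + (-2) * x0 ^ 3 + (-2) * x0 ^ 4 + (-1) * x0 ^ 5)).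
    { apply div_eq. lra. apply Rminus_diag_uniq. transitivity (P6 x0 * ((-1) + (7) * x0 ^ 1 + (12) * x0 ^ 2 + (-5) * x0 ^ 3 + (-18) * x0 ^ 4 + (-12) * x0 ^ 5 + (2) * x0 ^ 6 + (7) * x0 ^ 7 + (4) * x0 ^ 8 + (1) * x0 ^ 9)). unfold P6; ring. rewrite HP0; ring. }
    rewrite E2 in H; try rewrite E3 in H; rewrite E1 in H. exact H. }
  assert (R1 : RogersL ((1) + (-2) * x0 ^ 1 + (-1) * x0 ^ 2 + (2) * x0 ^ 3 + (2) * x0 ^ 4 + (1) * x0 ^ 5) + RogersL ((2) + (-5) * x0 ^ 1 + (-3) * x0 ^ 2 + (5) * x0 ^ 3 + (6) * x0 ^ 4 + (3) * x0 ^ 5) = RogersL ((-1) + (5) * x0 ^ 1 + (3) * x0 ^ 2 + (-5) * x0 ^ 3 + (-6) * x0 ^ 4 + (-3) * x0 ^ 5) + RogersL ((1) * x0 ^ 1 + (1) * x0 ^ 2 + (-1) * x0 ^ 3 + (-2) * x0 ^ 4 + (-1) * x0 ^ 5) + RogersL ((2) * x0 ^ 1 + (1) * x0 ^ 2 + (-2) * x0 ^ 3 + (-2) * x0 ^ 4 + (-1) * x0 ^ 5)).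
  { assert (bX : 0 < ((1) + (-2) * x0 ^ 1 + (-1) * x0 ^ 2 + (2) * x0 ^ 3 + (2) * x0 ^ 4 + (1) * x0 ^ 5) < 1) by (split; lra).
    assert (bY : 0 < ((2) + (-5) * x0 ^ 1 + (-3) * x0 ^ 2 + (5) * x0 ^ 3 + (6) * x0 ^ 4 + (3) * x0 ^ 5) < 1) by (split; lra).
    assert (H := abel5 _ _ bX bY).
    assert (bD : 0 < 1 - ((1) + (-2) * x0 ^ 1 + (-1) * x0 ^ 2 + (2) * x0 ^ 3 + (2) * x0 ^ 4 + (1) * x0 ^ 5) * ((2) + (-5) * x0 ^ 1 + (-3) * x0 ^ 2 + (5) * x0 ^ 3 + (6) * x0 ^ 4 + (3) * x0 ^ 5)) by nra.
    assert (E1 : ((1) + (-2) * x0 ^ 1 + (-1) * x0 ^ 2 + (2) * x0 ^ 3 + (2) * x0 ^ 4 + (1) * x0 ^ 5) * ((2) + (-5) * x0 ^ 1 + (-3) * x0 ^ 2 + (5) * x0 ^ 3 + (6) * x0 ^ 4 + (3) * x0 ^ 5) = ((-1) + (5) * x0 ^ 1 + (3) * x0 ^ 2 + (-5) * x0 ^ 3 + (-6) * x0 ^ 4 + (-3) * x0 ^ 5)).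
    { apply Rminus_diag_uniq. transitivity (P6 x0 * ((-3) + (8) * x0 ^ 1 + (14) * x0 ^ 2 + (9) * x0 ^ 3 + (3) * x0 ^ 4)). unfold P6; ring. rewrite HP0; ring. }
    assert (E2 : ((1) + (-2) * x0 ^ 1 + (-1) * x0 ^ 2 + (2) * x0 ^ 3 + (2) * x0 ^ 4 + (1) * x0 ^ 5) * (1 - ((2) + (-5) * x0 ^ 1 + (-3) * x0 ^ 2 + (5) * x0 ^ 3 + (6) * x0 ^ 4 + (3) * x0 ^ 5)) / (1 - ((1) + (-2) * x0 ^ 1 + (-1) * x0 ^ 2 + (2) * x0 ^ 3 + (2) * x0 ^ 4 + (1) * x0 ^ 5) * ((2) + (-5) * x0 ^ 1 + (-3) * x0 ^ 2 + (5) * x0 ^ 3 + (6) * x0 ^ 4 + (3) * x0 ^ 5)) = ((1) * x0 ^ 1 + (1) * x0 ^ 2 + (-1) * x0 ^ 3 + (-2) * x0 ^ 4 + (-1) * x0 ^ 5)).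
    { apply div_eq. lra. apply Rminus_diag_uniq. transitivity (P6 x0 * ((1) + (-6) * x0 ^ 1 + (2) * x0 ^ 2 + (25) * x0 ^ 3 + (21) * x0 ^ 4 + (-15) * x0 ^ 5 + (-42) * x0 ^ 6 + (-35) * x0 ^ 7 + (-15) * x0 ^ 8 + (-3) * x0 ^ 9)). unfold P6; ring. rewrite HP0; ring. }
    assert (E3 : ((2) + (-5) * x0 ^ 1 + (-3) * x0 ^ 2 + (5) * x0 ^ 3 + (6) * x0 ^ 4 + (3) * x0 ^ 5) * (1 - ((1) + (-2) * x0 ^ 1 + (-1) * x0 ^ 2 + (2) * x0 ^ 3 + (2) * x0 ^ 4 + (1) * x0 ^ 5)) / (1 - ((1) + (-2) * x0 ^ 1 + (-1) * x0 ^ 2 + (2) * x0 ^ 3 + (2) * x0 ^ 4 + (1) * x0 ^ 5) * ((2) + (-5) * x0 ^ 1 + (-3) * x0 ^ 2 + (5) * x0 ^ 3 + (6) * x0 ^ 4 + (3) * x0 ^ 5)) = ((2) * x0 ^ 1 + (1) * x0 ^ 2 + (-2) * x0 ^ 3 + (-2) * x0 ^ 4 + (-1) * x0 ^ 5)).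
    { apply div_eq. lra. apply Rminus_diag_uniq. transitivity (P6 x0 * ((-6) * x0 ^ 1 + (13) * x0 ^ 2 + (42) * x0 ^ 3 + (22) * x0 ^ 4 + (-26) * x0 ^ 5 + (-51) * x0 ^ 6 + (-38) * x0 ^ 7 + (-15) * x0 ^ 8 + (-3) * x0 ^ 9)). unfold P6; ring. rewrite HP0; ring. }
    rewrite E2 in H; try rewrite E3 in H; rewrite E1 in H. exact H. }
  assert (R2 : RogersL ((1) + (-1) * x0 ^ 2) + RogersL ((1) * x0 ^ 1) = RogersL ((1) * x0 ^ 1 + (-1) * x0 ^ 3) + RogersL ((2) + (-1) * x0 ^ 1 + (-3) * x0 ^ 2 + (1) * x0 ^ 4 + (1) * x0 ^ 5) + RogersL ((-1) + (1) * x0 ^ 1 + (1) * x0 ^ 2 + (1) * x0 ^ 3)).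
  { assert (bX : 0 < ((1) + (-1) * x0 ^ 2) < 1) by (split; lra).
    assert (bY : 0 < ((1) * x0 ^ 1) < 1) by (split; lra).
    assert (H := abel5 _ _ bX bY).
    assert (bD : 0 < 1 - ((1) + (-1) * x0 ^ 2) * ((1) * x0 ^ 1)) by nra.
    assert (E1 : ((1) + (-1) * x0 ^ 2) * ((1) * x0 ^ 1) = ((1) * x0 ^ 1 + (-1) * x0 ^ 3)).
    { apply Rminus_diag_uniq. transitivity (P6 x0 * 0). unfold P6; ring. rewrite HP0; ring. }
    assert (E2 : ((1) + (-1) * x0 ^ 2) * (1 - ((1) * x0 ^ 1)) / (1 - ((1) + (-1) * x0 ^ 2) * ((1) * x0 ^ 1)) = ((2) + (-1) * x0 ^ 1 + (-3) * x0 ^ 2 + (1) * x0 ^ 4 + (1) * x0 ^ 5)).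
    { apply div_eq. lra. apply Rminus_diag_uniq. transitivity (P6 x0 * ((1) + (-1) * x0 ^ 2)). unfold P6; ring. rewrite HP0; ring. }
    assert (E3 : ((1) * x0 ^ 1) * (1 - ((1) + (-1) * x0 ^ 2)) / (1 - ((1) + (-1) * x0 ^ 2) * ((1) * x0 ^ 1)) = ((-1) + (1) * x0 ^ 1 + (1) * x0 ^ 2 + (1) * x0 ^ 3)).
    { apply div_eq. lra. apply Rminus_diag_uniq. transitivity (P6 x0 * ((-1))). unfold P6; ring. rewrite HP0; ring. }
    rewrite E2 in H; try rewrite E3 in H; rewrite E1 in H. exact H. }
  assert (R3 : RogersL ((2) + (-2) * x0 ^ 1 + (-2) * x0 ^ 2 + (1) * x0 ^ 3 + (2) * x0 ^ 4 + (1) * x0 ^ 5) + RogersL ((2) + (-1) * x0 ^ 1 + (-2) * x0 ^ 2 + (1) * x0 ^ 4 + (1) * x0 ^ 5) = RogersL ((1) + (-2) * x0 ^ 1 + (-1) * x0 ^ 2 + (2) * x0 ^ 3 + (2) * x0 ^ 4 + (1) * x0 ^ 5) + RogersL ((1) + (-1) * x0 ^ 1) + RogersL ((1) + (-1) * x0 ^ 2)).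
  { assert (bX : 0 < ((2) + (-2) * x0 ^ 1 + (-2) * x0 ^ 2 + (1) * x0 ^ 3 + (2) * x0 ^ 4 + (1) * x0 ^ 5) < 1) by (split; lra).
    assert (bY : 0 < ((2) + (-1) * x0 ^ 1 + (-2) * x0 ^ 2 + (1) * x0 ^ 4 + (1) * x0 ^ 5) < 1) by (split; lra).
    assert (H := abel5 _ _ bX bY).
    assert (bD : 0 < 1 - ((2) + (-2) * x0 ^ 1 + (-2) * x0 ^ 2 + (1) * x0 ^ 3 + (2) * x0 ^ 4 + (1) * x0 ^ 5) * ((2) + (-1) * x0 ^ 1 + (-2) * x0 ^ 2 + (1) * x0 ^ 4 + (1) * x0 ^ 5)) by nra.
    assert (E1 : ((2) + (-2) * x0 ^ 1 + (-2) * x0 ^ 2 + (1) * x0 ^ 3 + (2) * x0 ^ 4 + (1) * x0 ^ 5) * ((2) + (-1) * x0 ^ 1 + (-2) * x0 ^ 2 + (1) * x0 ^ 4 + (1) * x0 ^ 5) = ((1) + (-2) * x0 ^ 1 + (-1) * x0 ^ 2 + (2) * x0 ^ 3 + (2) * x0 ^ 4 + (1) * x0 ^ 5)).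
    { apply Rminus_diag_uniq. transitivity (P6 x0 * ((-3) + (-2) * x0 ^ 1 + (1) * x0 ^ 2 + (2) * x0 ^ 3 + (1) * x0 ^ 4)). unfold P6; ring. rewrite HP0; ring. }
    assert (E2 : ((2) + (-2) * x0 ^ 1 + (-2) * x0 ^ 2 + (1) * x0 ^ 3 + (2) * x0 ^ 4 + (1) * x0 ^ 5) * (1 - ((2) + (-1) * x0 ^ 1 + (-2) * x0 ^ 2 + (1) * x0 ^ 4 + (1) * x0 ^ 5)) / (1 - ((2) + (-2) * x0 ^ 1 + (-2) * x0 ^ 2 + (1) * x0 ^ 3 + (2) * x0 ^ 4 + (1) * x0 ^ 5) * ((2) + (-1) * x0 ^ 1 + (-2) * x0 ^ 2 + (1) * x0 ^ 4 + (1) * x0 ^ 5)) = ((1) + (-1) * x0 ^ 1)).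
    { apply div_eq. lra. apply Rminus_diag_uniq. transitivity (P6 x0 * ((-1) + (3) * x0 ^ 1 + (2) * x0 ^ 2 + (-1) * x0 ^ 3 + (-2) * x0 ^ 4 + (-1) * x0 ^ 5)). unfold P6; ring. rewrite HP0; ring. }
    assert (E3 : ((2) + (-1) * x0 ^ 1 + (-2) * x0 ^ 2 + (1) * x0 ^ 4 + (1) * x0 ^ 5) * (1 - ((2) + (-2) * x0 ^ 1 + (-2) * x0 ^ 2 + (1) * x0 ^ 3 + (2) * x0 ^ 4 + (1) * x0 ^ 5)) / (1 - ((2) + (-2) * x0 ^ 1 + (-2) * x0 ^ 2 + (1) * x0 ^ 3 + (2) * x0 ^ 4 + (1) * x0 ^ 5) * ((2) + (-1) * x0 ^ 1 + (-2) * x0 ^ 2 + (1) * x0 ^ 4 + (1) * x0 ^ 5)) = ((1) + (-1) * x0 ^ 2)).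
    { apply div_eq. lra. apply Rminus_diag_uniq. transitivity (P6 x0 * ((-1) + (-1) * x0 ^ 1 + (3) * x0 ^ 2 + (2) * x0 ^ 3 + (-1) * x0 ^ 4 + (-2) * x0 ^ 5 + (-1) * x0 ^ 6)). unfold P6; ring. rewrite HP0; ring. }
    rewrite E2 in H; try rewrite E3 in H; rewrite E1 in H. exact H. }
  assert (R4 : RogersL ((2) * x0 ^ 1 + (1) * x0 ^ 2 + (-2) * x0 ^ 3 + (-2) * x0 ^ 4 + (-1) * x0 ^ 5) + RogersL ((2) * x0 ^ 1 + (1) * x0 ^ 2 + (-2) * x0 ^ 3 + (-2) * x0 ^ 4 + (-1) * x0 ^ 5) = RogersL ((-1) + (5) * x0 ^ 1 + (3) * x0 ^ 2 + (-5) * x0 ^ 3 + (-6) * x0 ^ 4 + (-3) * x0 ^ 5) + RogersL ((1) * x0 ^ 1 + (-1) * x0 ^ 3) + RogersL ((1) * x0 ^ 1 + (-1) * x0 ^ 3)).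
  { assert (bX : 0 < ((2) * x0 ^ 1 + (1) * x0 ^ 2 + (-2) * x0 ^ 3 + (-2) * x0 ^ 4 + (-1) * x0 ^ 5) < 1) by (split; lra).
    assert (bY : 0 < ((2) * x0 ^ 1 + (1) * x0 ^ 2 + (-2) * x0 ^ 3 + (-2) * x0 ^ 4 + (-1) * x0 ^ 5) < 1) by (split; lra).
    assert (H := abel5 _ _ bX bY).
    assert (bD : 0 < 1 - ((2) * x0 ^ 1 + (1) * x0 ^ 2 + (-2) * x0 ^ 3 + (-2) * x0 ^ 4 + (-1) * x0 ^ 5) * ((2) * x0 ^ 1 + (1) * x0 ^ 2 + (-2) * x0 ^ 3 + (-2) * x0 ^ 4 + (-1) * x0 ^ 5)) by nra.
    assert (E1 : ((2) * x0 ^ 1 + (1) * x0 ^ 2 + (-2) * x0 ^ 3 + (-2) * x0 ^ 4 + (-1) * x0 ^ 5) * ((2) * x0 ^ 1 + (1) * x0 ^ 2 + (-2) * x0 ^ 3 + (-2) * x0 ^ 4 + (-1) * x0 ^ 5) = ((-1) + (5) * x0 ^ 1 + (3) * x0 ^ 2 + (-5) * x0 ^ 3 + (-6) * x0 ^ 4 + (-3) * x0 ^ 5)).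
    { apply Rminus_diag_uniq. transitivity (P6 x0 * ((-1) + (3) * x0 ^ 1 + (5) * x0 ^ 2 + (3) * x0 ^ 3 + (1) * x0 ^ 4)). unfold P6; ring. rewrite HP0; ring. }
    assert (E2 : ((2) * x0 ^ 1 + (1) * x0 ^ 2 + (-2) * x0 ^ 3 + (-2) * x0 ^ 4 + (-1) * x0 ^ 5) * (1 - ((2) * x0 ^ 1 + (1) * x0 ^ 2 + (-2) * x0 ^ 3 + (-2) * x0 ^ 4 + (-1) * x0 ^ 5)) / (1 - ((2) * x0 ^ 1 + (1) * x0 ^ 2 + (-2) * x0 ^ 3 + (-2) * x0 ^ 4 + (-1) * x0 ^ 5) * ((2) * x0 ^ 1 + (1) * x0 ^ 2 + (-2) * x0 ^ 3 + (-2) * x0 ^ 4 + (-1) * x0 ^ 5)) = ((1) * x0 ^ 1 + (-1) * x0 ^ 3)).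
    { apply div_eq. lra. apply Rminus_diag_uniq. transitivity (P6 x0 * ((-1) * x0 ^ 1 + (1) * x0 ^ 2 + (3) * x0 ^ 3 + (-1) * x0 ^ 4 + (-4) * x0 ^ 5 + (-3) * x0 ^ 6 + (-1) * x0 ^ 7)). unfold P6; ring. rewrite HP0; ring. }
    assert (E3 : ((2) * x0 ^ 1 + (1) * x0 ^ 2 + (-2) * x0 ^ 3 + (-2) * x0 ^ 4 + (-1) * x0 ^ 5) * (1 - ((2) * x0 ^ 1 + (1) * x0 ^ 2 + (-2) * x0 ^ 3 + (-2) * x0 ^ 4 + (-1) * x0 ^ 5)) / (1 - ((2) * x0 ^ 1 + (1) * x0 ^ 2 + (-2) * x0 ^ 3 + (-2) * x0 ^ 4 + (-1) * x0 ^ 5) * ((2) * x0 ^ 1 + (1) * x0 ^ 2 + (-2) * x0 ^ 3 + (-2) * x0 ^ 4 + (-1) * x0 ^ 5)) = ((1) * x0 ^ 1 + (-1) * x0 ^ 3)).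
    { apply div_eq. lra. apply Rminus_diag_uniq. transitivity (P6 x0 * ((-1) * x0 ^ 1 + (1) * x0 ^ 2 + (3) * x0 ^ 3 + (-1) * x0 ^ 4 + (-4) * x0 ^ 5 + (-3) * x0 ^ 6 + (-1) * x0 ^ 7)). unfold P6; ring. rewrite HP0; ring. }
    rewrite E2 in H; try rewrite E3 in H; rewrite E1 in H. exact H. }
  assert (R5 : RogersL ((-1) + (1) * x0 ^ 1 + (3) * x0 ^ 2 + (-1) * x0 ^ 4 + (-1) * x0 ^ 5) + RogersL ((1) + (-1) * x0 ^ 1 + (-1) * x0 ^ 2 + (1) * x0 ^ 3 + (2) * x0 ^ 4 + (1) * x0 ^ 5) = RogersL ((2) + (-2) * x0 ^ 1 + (-2) * x0 ^ 2 + (1) * x0 ^ 3 + (2) * x0 ^ 4 + (1) * x0 ^ 5) + RogersL ((-1) + (2) * x0 ^ 1 + (2) * x0 ^ 2 + (-1) * x0 ^ 3 + (-2) * x0 ^ 4 + (-1) * x0 ^ 5) + RogersL ((1) * x0 ^ 2)).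
  { assert (bX : 0 < ((-1) + (1) * x0 ^ 1 + (3) * x0 ^ 2 + (-1) * x0 ^ 4 + (-1) * x0 ^ 5) < 1) by (split; lra).
    assert (bY : 0 < ((1) + (-1) * x0 ^ 1 + (-1) * x0 ^ 2 + (1) * x0 ^ 3 + (2) * x0 ^ 4 + (1) * x0 ^ 5) < 1) by (split; lra).
    assert (H := abel5 _ _ bX bY).
    assert (bD : 0 < 1 - ((-1) + (1) * x0 ^ 1 + (3) * x0 ^ 2 + (-1) * x0 ^ 4 + (-1) * x0 ^ 5) * ((1) + (-1) * x0 ^ 1 + (-1) * x0 ^ 2 + (1) * x0 ^ 3 + (2) * x0 ^ 4 + (1) * x0 ^ 5)) by nra.
    assert (E1 : ((-1) + (1) * x0 ^ 1 + (3) * x0 ^ 2 + (-1) * x0 ^ 4 + (-1) * x0 ^ 5) * ((1) + (-1) * x0 ^ 1 + (-1) * x0 ^ 2 + (1) * x0 ^ 3 + (2) * x0 ^ 4 + (1) * x0 ^ 5) = ((2) + (-2) * x0 ^ 1 + (-2) * x0 ^ 2 + (1) * x0 ^ 3 + (2) * x0 ^ 4 + (1) * x0 ^ 5)).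
    { apply Rminus_diag_uniq. transitivity (P6 x0 * ((3) + (2) * x0 ^ 1 + (-1) * x0 ^ 2 + (-2) * x0 ^ 3 + (-1) * x0 ^ 4)). unfold P6; ring. rewrite HP0; ring. }
    assert (E2 : ((-1) + (1) * x0 ^ 1 + (3) * x0 ^ 2 + (-1) * x0 ^ 4 + (-1) * x0 ^ 5) * (1 - ((1) + (-1) * x0 ^ 1 + (-1) * x0 ^ 2 + (1) * x0 ^ 3 + (2) * x0 ^ 4 + (1) * x0 ^ 5)) / (1 - ((-1) + (1) * x0 ^ 1 + (3) * x0 ^ 2 + (-1) * x0 ^ 4 + (-1) * x0 ^ 5) * ((1) + (-1) * x0 ^ 1 + (-1) * x0 ^ 2 + (1) * x0 ^ 3 + (2) * x0 ^ 4 + (1) * x0 ^ 5)) = ((-1) + (2) * x0 ^ 1 + (2) * x0 ^ 2 + (-1) * x0 ^ 3 + (-2) * x0 ^ 4 + (-1) * x0 ^ 5)).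
    { apply div_eq. lra. apply Rminus_diag_uniq. transitivity (P6 x0 * ((-2) + (3) * x0 ^ 1 + (9) * x0 ^ 2 + (-13) * x0 ^ 4 + (-12) * x0 ^ 5 + (6) * x0 ^ 7 + (4) * x0 ^ 8 + (1) * x0 ^ 9)). unfold P6; ring. rewrite HP0; ring. }
    assert (E3 : ((1) + (-1) * x0 ^ 1 + (-1) * x0 ^ 2 + (1) * x0 ^ 3 + (2) * x0 ^ 4 + (1) * x0 ^ 5) * (1 - ((-1) + (1) * x0 ^ 1 + (3) * x0 ^ 2 + (-1) * x0 ^ 4 + (-1) * x0 ^ 5)) / (1 - ((-1) + (1) * x0 ^ 1 + (3) * x0 ^ 2 + (-1) * x0 ^ 4 + (-1) * x0 ^ 5) * ((1) + (-1) * x0 ^ 1 + (-1) * x0 ^ 2 + (1) * x0 ^ 3 + (2) * x0 ^ 4 + (1) * x0 ^ 5)) = ((1) * x0 ^ 2)).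
    { apply div_eq. lra. apply Rminus_diag_uniq. transitivity (P6 x0 * ((-2) + (-1) * x0 ^ 1 + (4) * x0 ^ 2 + (4) * x0 ^ 3 + (-2) * x0 ^ 5 + (-1) * x0 ^ 6)). unfold P6; ring. rewrite HP0; ring. }
    rewrite E2 in H; try rewrite E3 in H; rewrite E1 in H. exact H. }
  assert (F0 : RogersL ((2) + (-2) * x0 ^ 1 + (-2) * x0 ^ 2 + (1) * x0 ^ 3 + (2) * x0 ^ 4 + (1) * x0 ^ 5) + RogersL ((-1) + (2) * x0 ^ 1 + (2) * x0 ^ 2 + (-1) * x0 ^ 3 + (-2) * x0 ^ 4 + (-1) * x0 ^ 5) = PI ^ 2 / 6).
  { assert (H := L_refl ((2) + (-2) * x0 ^ 1 + (-2) * x0 ^ 2 + (1) * x0 ^ 3 + (2) * x0 ^ 4 + (1) * x0 ^ 5) ltac:(split; lra)).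
    replace (1 - ((2) + (-2) * x0 ^ 1 + (-2) * x0 ^ 2 + (1) * x0 ^ 3 + (2) * x0 ^ 4 + (1) * x0 ^ 5)) with ((-1) + (2) * x0 ^ 1 + (2) * x0 ^ 2 + (-1) * x0 ^ 3 + (-2) * x0 ^ 4 + (-1) * x0 ^ 5) in H by ring. exact H. }
  assert (F1 : RogersL ((-1) + (1) * x0 ^ 1 + (3) * x0 ^ 2 + (-1) * x0 ^ 4 + (-1) * x0 ^ 5) + RogersL ((2) + (-1) * x0 ^ 1 + (-3) * x0 ^ 2 + (1) * x0 ^ 4 + (1) * x0 ^ 5) = PI ^ 2 / 6).
  { assert (H := L_refl ((-1) + (1) * x0 ^ 1 + (3) * x0 ^ 2 + (-1) * x0 ^ 4 + (-1) * x0 ^ 5) ltac:(split; lra)).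
    replace (1 - ((-1) + (1) * x0 ^ 1 + (3) * x0 ^ 2 + (-1) * x0 ^ 4 + (-1) * x0 ^ 5)) with ((2) + (-1) * x0 ^ 1 + (-3) * x0 ^ 2 + (1) * x0 ^ 4 + (1) * x0 ^ 5) in H by ring. exact H. }
  assert (F2 : RogersL ((2) + (-1) * x0 ^ 1 + (-1) * x0 ^ 2 + (-1) * x0 ^ 3) + RogersL ((-1) + (1) * x0 ^ 1 + (1) * x0 ^ 2 + (1) * x0 ^ 3) = PI ^ 2 / 6).
  { assert (H := L_refl ((2) + (-1) * x0 ^ 1 + (-1) * x0 ^ 2 + (-1) * x0 ^ 3) ltac:(split; lra)).
    replace (1 - ((2) + (-1) * x0 ^ 1 + (-1) * x0 ^ 2 + (-1) * x0 ^ 3)) with ((-1) + (1) * x0 ^ 1 + (1) * x0 ^ 2 + (1) * x0 ^ 3) in H by ring. exact H. }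
  assert (F3 : RogersL ((-1) + (1) * x0 ^ 1 + (2) * x0 ^ 2 + (-1) * x0 ^ 4 + (-1) * x0 ^ 5) + RogersL ((2) + (-1) * x0 ^ 1 + (-2) * x0 ^ 2 + (1) * x0 ^ 4 + (1) * x0 ^ 5) = PI ^ 2 / 6).
  { assert (H := L_refl ((-1) + (1) * x0 ^ 1 + (2) * x0 ^ 2 + (-1) * x0 ^ 4 + (-1) * x0 ^ 5) ltac:(split; lra)).
    replace (1 - ((-1) + (1) * x0 ^ 1 + (2) * x0 ^ 2 + (-1) * x0 ^ 4 + (-1) * x0 ^ 5)) with ((2) + (-1) * x0 ^ 1 + (-2) * x0 ^ 2 + (1) * x0 ^ 4 + (1) * x0 ^ 5) in H by ring. exact H. }
  assert (F4 : RogersL ((2) * x0 ^ 1 + (1) * x0 ^ 2 + (-2) * x0 ^ 3 + (-2) * x0 ^ 4 + (-1) * x0 ^ 5) + RogersL ((1) + (-2) * x0 ^ 1 + (-1) * x0 ^ 2 + (2) * x0 ^ 3 + (2) * x0 ^ 4 + (1) * x0 ^ 5) = PI ^ 2 / 6).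
  { assert (H := L_refl ((2) * x0 ^ 1 + (1) * x0 ^ 2 + (-2) * x0 ^ 3 + (-2) * x0 ^ 4 + (-1) * x0 ^ 5) ltac:(split; lra)).
    replace (1 - ((2) * x0 ^ 1 + (1) * x0 ^ 2 + (-2) * x0 ^ 3 + (-2) * x0 ^ 4 + (-1) * x0 ^ 5)) with ((1) + (-2) * x0 ^ 1 + (-1) * x0 ^ 2 + (2) * x0 ^ 3 + (2) * x0 ^ 4 + (1) * x0 ^ 5) in H by ring. exact H. }
  assert (F5 : RogersL ((2) + (-5) * x0 ^ 1 + (-3) * x0 ^ 2 + (5) * x0 ^ 3 + (6) * x0 ^ 4 + (3) * x0 ^ 5) + RogersL ((-1) + (5) * x0 ^ 1 + (3) * x0 ^ 2 + (-5) * x0 ^ 3 + (-6) * x0 ^ 4 + (-3) * x0 ^ 5) = PI ^ 2 / 6).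
  { assert (H := L_refl ((2) + (-5) * x0 ^ 1 + (-3) * x0 ^ 2 + (5) * x0 ^ 3 + (6) * x0 ^ 4 + (3) * x0 ^ 5) ltac:(split; lra)).
    replace (1 - ((2) + (-5) * x0 ^ 1 + (-3) * x0 ^ 2 + (5) * x0 ^ 3 + (6) * x0 ^ 4 + (3) * x0 ^ 5)) with ((-1) + (5) * x0 ^ 1 + (3) * x0 ^ 2 + (-5) * x0 ^ 3 + (-6) * x0 ^ 4 + (-3) * x0 ^ 5) in H by ring. exact H. }
  assert (F6 : RogersL ((1) * x0 ^ 1 + (1) * x0 ^ 2 + (-1) * x0 ^ 3 + (-2) * x0 ^ 4 + (-1) * x0 ^ 5) + RogersL ((1) + (-1) * x0 ^ 1 + (-1) * x0 ^ 2 + (1) * x0 ^ 3 + (2) * x0 ^ 4 + (1) * x0 ^ 5) = PI ^ 2 / 6).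
  { assert (H := L_refl ((1) * x0 ^ 1 + (1) * x0 ^ 2 + (-1) * x0 ^ 3 + (-2) * x0 ^ 4 + (-1) * x0 ^ 5) ltac:(split; lra)).
    replace (1 - ((1) * x0 ^ 1 + (1) * x0 ^ 2 + (-1) * x0 ^ 3 + (-2) * x0 ^ 4 + (-1) * x0 ^ 5)) with ((1) + (-1) * x0 ^ 1 + (-1) * x0 ^ 2 + (1) * x0 ^ 3 + (2) * x0 ^ 4 + (1) * x0 ^ 5) in H by ring. exact H. }
  assert (F7 : RogersL ((1) + (-1) * x0 ^ 2) + RogersL ((1) * x0 ^ 2) = PI ^ 2 / 6).
  { assert (H := L_refl ((1) + (-1) * x0 ^ 2) ltac:(split; lra)).
    replace (1 - ((1) + (-1) * x0 ^ 2)) with ((1) * x0 ^ 2) in H by ring. exact H. }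
  assert (F8 : RogersL ((1) * x0 ^ 1) + RogersL ((1) + (-1) * x0 ^ 1) = PI ^ 2 / 6).
  { assert (H := L_refl ((1) * x0 ^ 1) ltac:(split; lra)).
    replace (1 - ((1) * x0 ^ 1)) with ((1) + (-1) * x0 ^ 1) in H by ring. exact H. }
  assert (F9 : RogersL ((1) + (-1) * x0 ^ 1) + RogersL ((1) * x0 ^ 1) = PI ^ 2 / 6).
  { assert (H := L_refl ((1) + (-1) * x0 ^ 1) ltac:(split; lra)).
    replace (1 - ((1) + (-1) * x0 ^ 1)) with ((1) * x0 ^ 1) in H by ring. exact H. }
  set (w := x0 ^ 3 / (x0 - 1)).
  assert (Hw : x1 = w).
  { assert (Pw : P6 w = 0).
    { assert (E : P6 w * (x0 - 1) ^ 6 = P6 x0 * ((1) + (-4) * x0 ^ 1 + (7) * x0 ^ 2 + (-6) * x0 ^ 3 + (1) * x0 ^ 4 + (3) * x0 ^ 5 + (-4) * x0 ^ 6 + (3) * x0 ^ 7 + (-1) * x0 ^ 8 + (-1) * x0 ^ 9 + (2) * x0 ^ 10 + (-1) * x0 ^ 11 + (1) * x0 ^ 12)) by (unfold P6, w; field; lra).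
      rewrite HP0, Rmult_0_l in E. apply Rmult_integral in E. destruct E as [E|E]. exact E.
      exfalso. apply (pow_nonzero (x0 - 1) 6). lra. exact E. }
    assert (bw : -2 <= w <= -1).
    { unfold w. split.
      - apply (Rmult_le_reg_r (1 - x0)). lra. unfold Rdiv. 
        replace (x0 ^ 3 * / (x0 - 1) * (1 - x0)) with (- x0 ^ 3) by (field; lra). lra.
      - apply (Rmult_le_reg_r (1 - x0)). lra. unfold Rdiv.
        replace (x0 ^ 3 * / (x0 - 1) * (1 - x0)) with (- x0 ^ 3) by (field; lra). lra. }
    apply P6_inj_neg; lra. }
  assert (HY : 1 / (1 - x1) = ((2) + (-1) * x0 ^ 1 + (-1) * x0 ^ 2 + (-1) * x0 ^ 3)).
  { rewrite Hw. unfold w.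
    assert (E : ((2) + (-1) * x0 ^ 1 + (-1) * x0 ^ 2 + (-1) * x0 ^ 3) * (x0 - 1 - x0 ^ 3) = x0 - 1).
    { apply Rminus_diag_uniq. transitivity (P6 x0 * ((1))). unfold P6; ring. rewrite HP0; ring. }
    assert (x0 - 1 - x0 ^ 3 <> 0) by lra.
    replace (1 - x0 ^ 3 / (x0 - 1)) with ((x0 - 1 - x0 ^ 3) / (x0 - 1)) by (field; lra).
    rewrite <- E at 2. field. repeat split; lra. }
  rewrite HY.
  replace (RogersL x0) with (RogersL ((1) * x0 ^ 1)) by (f_equal; ring).
  lra.
Qed.
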